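(* Let $\frac12<p<1$ and let $f:\mathbb{Z}^+\to[0,\infty)$ be monotonically increasing (non-decreasing). Let $\{N_j\}_{j\ge0}$ be the discrete-time, time-inhomogeneous Markov chain on $\mathbb{N}$ with $N_0=1$, $N_1\sim\mathrm{Bern}\big(\frac{1-p}{p}\big)$, and, for $j\ge1$, conditionally on $N_j$, $N_{j+1}\sim\mathrm{Bin}\big(N_j,\frac{1-p}{p}\big)+\mathrm{Poiss}\big(\frac{1-p}{p}f(j)\big)$ with independent summands. Let $\mathbf{E}^*$ denote expectation for this chain and $K=\#\{j\in\mathbb{Z}^+:N_j=0\}$. If $$\sum_{j=1}^{\infty}e^{-\frac{1-p}{2p-1}f(j)}=\infty,$$ then $\mathbf{E}^*[K]=\infty$. *)

(* Defs.v *)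
From Stdlib Require Import Reals Arith.
From Coquelicot Require Import Coquelicot.
Open Scope R_scope.

Definition qpar (p : R) : R := (1 - p) / p.

Definition binom_pmf (n : nat) (r : R) (k : nat) : R :=
  if (k <=? n)%nat then Binomial.C n k * r ^ k * (1 - r) ^ (n - k) else 0.

Definition poiss_pmf (l : R) (k : nat) : R :=
  exp (- l) * l ^ k / INR (fact k).

(* transition probability P(N_{j+1} = m | N_j = n) for j >= 1:
   Bin(n, q) + Poiss(q f(j)), independent summands (convolution) *)
Definition trans (p : R) (f : nat -> R) (j n m : nat) : R :=
  sum_f_R0 (fun k => binom_pmf n (qpar p) k * poiss_pmf (qpar p * f j) (m - k)) m.

(* law p f j n = P*(N_j = n) *)
Fixpoint law (p : R) (f : nat -> R) (j : nat) : nat -> R :=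
  match j with
  | O => fun n => if (n =? 1)%nat then 1 else 0
  | S j' =>
      match j' with
      | O => fun m => if (m =? 0)%nat then 1 - qpar p
                      else if (m =? 1)%nat then qpar p else 0
      | _ => fun m => Series (fun n => law p f j' n * trans p f j' n m)
      end
  end.

(* E*[K] where K = #{j >= 1 : N_j = 0}; E*[K] = sum_{j>=1} P*(N_j = 0) *)
Definition ExpK (p : R) (f : nat -> R) : Rbar :=
  Lim_seq (fun n => sum_f_R0 (fun j => law p f (S j) 0%nat) n).

(* Main.v *)
Require Import Defs.
From Stdlib Require Import Reals Lra Lia.
From Coquelicot Require Import Coquelicot.
Open Scope R_scope.

Lemma is_series_lim (a : nat -> R) (l : R) :
  is_series a l <-> is_lim_seq (sum_n a) l.
Proof. split; intro H; exact H. Qed.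

Lemma partial_le (a : nat -> R) (l : R) :
  (forall n, 0 <= a n) -> is_series a l -> forall N, sum_n a N <= l.
Proof.
  intros Ha Hl N.
  apply is_series_lim in Hl.
  assert (Rbar_le (sum_n a N) l).
  { apply (is_lim_seq_le_loc (fun _ => sum_n a N) (sum_n a)).
    exists N. intros n Hn. induction Hn. lra.
    rewrite sum_Sn. unfold plus; simpl. specialize (Ha (S m)). lra.
    apply is_lim_seq_const. exact Hl. }
  exact H.
Qed.

Lemma bounded_ex (a : nat -> R) (M : R) :
  (forall n, 0 <= a n) -> (forall N, sum_n a N <= M) -> ex_series a.
Proof.
  intros Ha HM.
  assert (Hi : forall n, sum_n a n <= sum_n a (S n)).
  { intro n. rewrite sum_Sn. unfold plus; simpl. specialize (Ha (S n)). lra. }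
  destruct (ex_lim_seq_incr _ Hi) as [l Hl].
  assert (H1 : Rbar_le l M).
  { apply (is_lim_seq_le (sum_n a) (fun _ => M)); auto. apply is_lim_seq_const. }
  assert (H2 : Rbar_le (sum_n a 0) l).
  { apply (is_lim_seq_le (fun _ => sum_n a 0) (sum_n a)); auto.
    intro n. induction n. lra. specialize (Hi n). lra. apply is_lim_seq_const. }
  destruct l as [l| |]; simpl in *; try contradiction.
  exists l. apply is_series_lim. exact Hl.
Qed.

Lemma lim_le_bound (a : nat -> R) (l M : R) :
  is_series a l -> (forall N, sum_n a N <= M) -> l <= M.
Proof.
  intros Hl HM. apply is_series_lim in Hl.
  assert (Rbar_le l M).
  { apply (is_lim_seq_le (sum_n a) (fun _ => M)); auto. apply is_lim_seq_const. }
  exact H.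
Qed.

Lemma finsum_series (a : nat -> nat -> R) (A : nat -> R) N :
  (forall i, is_series (a i) (A i)) ->
  is_series (fun m => sum_n (fun i => a i m) N) (sum_n A N).
Proof.
  intros H. induction N.
  - rewrite sum_O. eapply is_series_ext; [|apply H]. intro; now rewrite sum_O.
  - rewrite sum_Sn. eapply is_series_ext; [|exact (is_series_plus _ _ _ _ IHN (H (S N)))].
    intro m. now rewrite sum_Sn.
Qed.

Lemma sum_n_le (a b : nat -> R) N : (forall n, a n <= b n) -> sum_n a N <= sum_n b N.
Proof.
  intros H. induction N. rewrite !sum_O; auto.
  rewrite !sum_Sn. unfold plus; simpl. specialize (H (S N)). lra.
Qed.

Lemma sum_n_ge0 (a : nat -> R) N : (forall n, 0 <= a n) -> 0 <= sum_n a N.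
Proof.
  intros H. induction N. rewrite sum_O; auto.
  rewrite sum_Sn. unfold plus; simpl. specialize (H (S N)). lra.
Qed.

Lemma term_le (a : nat -> R) (l : R) :
  (forall n, 0 <= a n) -> is_series a l -> forall n, a n <= l.
Proof.
  intros Ha Hl n. eapply Rle_trans; [|apply (partial_le a l Ha Hl n)].
  destruct n. rewrite sum_O; lra.
  rewrite sum_Sn. unfold plus; simpl. pose proof (sum_n_ge0 a n Ha). lra.
Qed.

Lemma fubini_nonneg (a : nat -> nat -> R) (A : nat -> R) (T : R) :
  (forall n m, 0 <= a n m) -> (forall n, is_series (a n) (A n)) -> is_series A T ->
  (forall m, ex_series (fun n => a n m)) /\
  is_series (fun m => Series (fun n => a n m)) T.
Proof.
  intros Hpos HA HT.
  assert (HA0 : forall n, 0 <= A n).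
  { intro n. eapply Rle_trans; [apply (Hpos n 0%nat)|]. apply (term_le (a n)); auto. }
  assert (Hcol : forall m, ex_series (fun n => a n m)).
  { intro m. apply (@ex_series_le R_AbsRing R_CompleteNormedModule (fun n => a n m) A). intro n. unfold norm; simpl.
    rewrite Rabs_pos_eq by auto. apply (term_le (a n)); auto. exists T; auto. }
  split; auto.
  set (B := fun m => Series (fun n => a n m)).
  assert (HB0 : forall m, 0 <= B m).
  { intro m. unfold B. eapply Rle_trans; [|apply (partial_le (fun n => a n m) _ (fun n => Hpos n m) (Series_correct _ (Hcol m)) 0)].
    rewrite sum_O. auto. }
  assert (HBle : forall M, sum_n B M <= T).
  { intro M.
    assert (Hs : is_series (fun n => sum_n (fun m => a n m) M) (sum_n B M)).
    { apply (finsum_series (fun m n => a n m)). intro i. apply Series_correct, Hcol. }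
    apply (lim_le_bound _ _ _ Hs). intro N. eapply Rle_trans; [|apply (partial_le A T HA0 HT N)].
    apply sum_n_le. intro n. apply (partial_le (a n)); auto. }
  assert (HBex : ex_series B) by (apply (bounded_ex B T); auto).
  assert (HTle : T <= Series B).
  { apply (lim_le_bound A). auto. intro N.
    assert (Hs : is_series (fun m => sum_n (fun n => a n m) N) (sum_n A N)).
    { apply (finsum_series a). auto. }
    rewrite <- (is_series_unique _ _ Hs). apply Series_le; auto.
    intro m. split. apply sum_n_ge0; auto.
    apply (partial_le (fun n => a n m)); auto. apply Series_correct, Hcol. }
  assert (HBT : Series B <= T).
  { apply (lim_le_bound B). apply Series_correct; auto. auto. }
  replace T with (Series B) by lra. apply Series_correct; auto.
Qed.

Lemma C_ge0 n k : 0 <= Binomial.C n k.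
Proof.
  unfold Binomial.C. apply Rmult_le_pos. apply pos_INR.
  left. apply Rinv_0_lt_compat. apply Rmult_lt_0_compat; apply lt_0_INR, Factorial.lt_O_fact.
Qed.

Lemma binom_ge0 n r k : 0 <= r <= 1 -> 0 <= binom_pmf n r k.
Proof.
  intros Hr. unfold binom_pmf. destruct (k <=? n)%nat; [|lra].
  apply Rmult_le_pos; [apply Rmult_le_pos|]; [apply C_ge0| apply pow_le; lra| apply pow_le; lra].
Qed.

Lemma poiss_ge0 l k : 0 <= l -> 0 <= poiss_pmf l k.
Proof.
  intros Hl. unfold poiss_pmf. apply Rmult_le_pos.
  apply Rmult_le_pos. left; apply exp_pos. apply pow_le; lra.
  left. apply Rinv_0_lt_compat, lt_0_INR, Factorial.lt_O_fact.
Qed.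

Lemma trans_ge0 p f j n m : 0 <= qpar p <= 1 -> 0 <= f j -> 0 <= trans p f j n m.
Proof.
  intros Hq Hf. unfold trans. apply cond_pos_sum. intro k.
  apply Rmult_le_pos. apply binom_ge0; auto. apply poiss_ge0. apply Rmult_le_pos; lra.
Qed.

Lemma finsupp_series (a : nat -> R) n :
  (forall k, (n < k)%nat -> a k = 0) -> is_series a (sum_n a n).
Proof.
  intros H. apply is_series_lim.
  apply (is_lim_seq_ext_loc (fun _ => sum_n a n)). exists n. intros N HN.
  induction HN. auto. rewrite sum_Sn, (H (S m)) by lia. rewrite <- IHHN. exact (eq_sym (plus_zero_r _)).
  apply is_lim_seq_const.
Qed.

Lemma binom_series n r s : is_series (fun k => binom_pmf n r k * s ^ k) ((1 - r + r * s) ^ n).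
Proof.
  replace ((1 - r + r * s) ^ n) with (sum_n (fun k => binom_pmf n r k * s ^ k) n).
  - apply finsupp_series. intros k Hk. unfold binom_pmf.
    replace (k <=? n)%nat with false by (symmetry; apply Nat.leb_gt; lia). ring.
  - rewrite sum_n_Reals. replace (1 - r + r * s) with (r * s + (1 - r)) by ring.
    rewrite binomial. apply sum_eq. intros i Hi. unfold binom_pmf.
    replace (i <=? n)%nat with true by (symmetry; apply Nat.leb_le; lia).
    rewrite Rpow_mult_distr. ring.
Qed.

Lemma poiss_series l s : is_series (fun k => poiss_pmf l k * s ^ k) (exp (l * (s - 1))).
Proof.
  pose proof (is_exp_Reals (l * s)) as H. unfold is_pseries in H.
  apply (is_series_scal_l (exp (- l))) in H.
  eapply is_series_ext; [|replace (exp (l * (s - 1))) with (scal (exp (- l)) (exp (l * s)))].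
  2: exact H.
  - intro k. unfold scal; simpl. unfold mult; simpl. rewrite pow_n_pow.
    unfold poiss_pmf. rewrite Rpow_mult_distr. unfold Rdiv. ring.
  - unfold scal; simpl. unfold mult; simpl. rewrite <- exp_plus. f_equal. ring.
Qed.

Lemma trans_series p f j n s : 0 <= qpar p <= 1 -> 0 <= f j -> 0 <= s ->
  is_series (fun m => trans p f j n m * s ^ m)
    ((1 - qpar p + qpar p * s) ^ n * exp (qpar p * f j * (s - 1))).
Proof.
  intros Hq Hf Hs.
  assert (Hl : 0 <= qpar p * f j) by (apply Rmult_le_pos; lra).
  pose proof (is_series_mult _ _ _ _ (binom_series n (qpar p) s) (poiss_series (qpar p * f j) s)) as H.
  eapply is_series_ext; [|apply H].
  - intro m. unfold trans. rewrite (Rmult_comm _ (s ^ m)), scal_sum. apply sum_eq. intros i Hi.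
    transitivity (binom_pmf n (qpar p) i * poiss_pmf (qpar p * f j) (m - i) * (s ^ i * s ^ (m - i))).
    ring. rewrite <- pow_add. replace (i + (m - i))%nat with m by lia. ring.
  - exists ((1 - qpar p + qpar p * s) ^ n). eapply is_series_ext; [|apply binom_series].
    intro k. simpl. rewrite Rabs_pos_eq; auto. apply Rmult_le_pos. apply binom_ge0; auto. apply pow_le; auto.
  - exists (exp (qpar p * f j * (s - 1))). eapply is_series_ext; [|apply poiss_series].
    intro k. simpl. rewrite Rabs_pos_eq; auto. apply Rmult_le_pos. apply poiss_ge0; auto. apply pow_le; auto.
Qed.

Fixpoint Lm (p : R) (f : nat -> R) (k : nat) : R :=
  match k with O => 0 | S k' => qpar p * (Lm p f k' + f (S k')) end.

Definition G p f k s := (1 - qpar p ^ (S k) + qpar p ^ (S k) * s) * exp (- Lm p f k * (1 - s)).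

Lemma law_SS p f k m : law p f (S (S k)) m = Series (fun n => law p f (S k) n * trans p f (S k) n m).
Proof. reflexivity. Qed.

Lemma law_pgf p f (Hq : 0 <= qpar p <= 1) (hf0 : forall j : nat, (1 <= j)%nat -> 0 <= f j) k :
  (forall m, 0 <= law p f (S k) m) /\
  forall s, 0 <= s <= 1 -> is_series (fun m => law p f (S k) m * s ^ m) (G p f k s).
Proof.
  induction k as [|k [IH0 IH1]].
  - split.
    + intro m. simpl. destruct (m =? 0)%nat. lra. destruct (m =? 1)%nat; lra.
    + intros s Hs. replace (G p f 0 s) with (sum_n (fun m => law p f 1 m * s ^ m) 1).
      * apply finsupp_series. intros k Hk. simpl.
        replace (k =? 0)%nat with false by (symmetry; apply Nat.eqb_neq; lia).
        replace (k =? 1)%nat with false by (symmetry; apply Nat.eqb_neq; lia). ring.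
      * rewrite sum_Sn, sum_O. unfold G; simpl. replace (- 0 * (1 - s)) with 0 by ring. rewrite exp_0.
        unfold plus; simpl. ring.
  - assert (Hf : 0 <= f (S k)) by (apply hf0; lia).
    assert (main : forall s, 0 <= s <= 1 ->
      (forall m, ex_series (fun n => law p f (S k) n * trans p f (S k) n m * s ^ m)) /\
      is_series (fun m => law p f (S (S k)) m * s ^ m) (G p f (S k) s)).
    { intros s Hs.
      set (h := 1 - qpar p + qpar p * s).
      set (E := exp (qpar p * f (S k) * (s - 1))).
      assert (Hh : 0 <= h <= 1) by (unfold h; split; nra).
      destruct (fubini_nonneg (fun n m => law p f (S k) n * trans p f (S k) n m * s ^ m)
                  (fun n => law p f (S k) n * (h ^ n * E)) (E * G p f k h)) as [Hc Hs2].
      - intros n m. apply Rmult_le_pos. apply Rmult_le_pos. auto. apply trans_ge0; auto.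
        apply pow_le; lra.
      - intro n. pose proof (is_series_scal_l (law p f (S k) n) _ _ (trans_series p f (S k) n s Hq Hf (proj1 Hs))) as X.
        eapply is_series_ext; [|exact X]. intro m. unfold scal; simpl; unfold mult; simpl. ring.
      - pose proof (is_series_scal_l E _ _ (IH1 h Hh)) as X.
        eapply is_series_ext; [|exact X]. intro m. unfold scal; simpl; unfold mult; simpl. ring.
      - split; auto.
        replace (G p f (S k) s) with (E * G p f k h).
        + eapply is_series_ext; [|exact Hs2]. intro m. cbv beta.
          rewrite law_SS. rewrite <- Series_scal_r. reflexivity.
        + unfold G, E, h. simpl Lm.
          transitivity ((1 - qpar p ^ S k + qpar p ^ S k * (1 - qpar p + qpar p * s)) *
            exp (qpar p * f (S k) * (s - 1) + - Lm p f k * (1 - (1 - qpar p + qpar p * s)))).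
          rewrite exp_plus; ring.
          f_equal. simpl; ring. f_equal; ring. }
    split.
    + intro m. destruct (main 1 ltac:(lra)) as [Hc _].
      rewrite law_SS.
      assert (He : ex_series (fun n => law p f (S k) n * trans p f (S k) n m)).
      { eapply ex_series_ext; [|apply (Hc m)]. intro n. simpl. rewrite pow1. ring. }
      assert (Hn : forall n, 0 <= law p f (S k) n * trans p f (S k) n m).
      { intro n. apply Rmult_le_pos; auto. apply trans_ge0; auto. }
      eapply Rle_trans; [|apply (term_le _ _ Hn (Series_correct _ He) 0)]. auto.
    + intros s Hs. apply (main s Hs).
Qed.

Lemma law0_eq p f (Hq : 0 <= qpar p <= 1) (hf0 : forall j : nat, (1 <= j)%nat -> 0 <= f j) k :
  law p f (S k) 0 = (1 - qpar p ^ S k) * exp (- Lm p f k).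
Proof.
  destruct (law_pgf p f Hq hf0 k) as [_ H1].
  specialize (H1 0 ltac:(lra)).
  assert (H2 : is_series (fun m => law p f (S k) m * 0 ^ m) (sum_n (fun m => law p f (S k) m * 0 ^ m) 0)).
  { apply finsupp_series. intros m Hm. destruct m. lia. simpl. ring. }
  rewrite sum_O in H2. cbv beta in H2. rewrite pow_O, Rmult_1_r in H2.
  rewrite <- (is_series_unique _ _ H2), (is_series_unique _ _ H1). unfold G.
  f_equal. ring. f_equal. ring.
Qed.

Lemma Lm_bound p f (Hq : 0 <= qpar p < 1)
  (hf0 : forall j : nat, (1 <= j)%nat -> 0 <= f j)
  (hfmon : forall i j : nat, (1 <= i)%nat -> (i <= j)%nat -> f i <= f j) k :
  Lm p f k <= qpar p / (1 - qpar p) * f (S k).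
Proof.
  assert (Hc : 0 <= qpar p / (1 - qpar p)) by (apply Rdiv_le_0_compat; lra).
  induction k.
  - simpl. assert (0 <= f 1%nat) by (apply hf0; lia). nra.
  - simpl Lm. assert (f (S k) <= f (S (S k))) by (apply hfmon; lia).
    assert (0 <= f (S k)) by (apply hf0; lia).
    apply Rle_trans with (qpar p * (qpar p / (1 - qpar p) * f (S k) + f (S k))).
    apply Rmult_le_compat_l; lra.
    replace (qpar p * (qpar p / (1 - qpar p) * f (S k) + f (S k))) with
      (qpar p / (1 - qpar p) * f (S k)) by (field; lra).
    apply Rmult_le_compat_l; lra.
Qed.

Theorem proposition6 (p : R) (f : nat -> R)
  (hp1 : 1 / 2 < p) (hp2 : p < 1)
  (hf0 : forall j : nat, (1 <= j)%nat -> 0 <= f j)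
  (hfmon : forall i j : nat, (1 <= i)%nat -> (i <= j)%nat -> f i <= f j)
  (hdiv : Lim_seq (fun n => sum_f_R0
            (fun j => exp (- ((1 - p) / (2 * p - 1)) * f (S j))) n) = p_infty) :
  ExpK p f = p_infty.
Proof.
  set (q := qpar p).
  assert (Hq : 0 < q < 1).
  { unfold q, qpar. split. apply Rdiv_lt_0_compat; lra.
    apply Rmult_lt_reg_r with p. lra. unfold Rdiv. rewrite Rmult_assoc, Rinv_l by lra. lra. }
  assert (Hc : (1 - p) / (2 * p - 1) = q / (1 - q)) by (unfold q, qpar; field; lra).
  set (v := fun n => sum_f_R0 (fun j => exp (- ((1 - p) / (2 * p - 1)) * f (S j))) n).
  assert (Hv : is_lim_seq v p_infty).
  { rewrite <- hdiv. apply Lim_seq_correct. apply ex_lim_seq_incr. intro n.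
    unfold v. simpl. pose proof (exp_pos (- ((1 - p) / (2 * p - 1)) * f (S (S n)))). lra. }
  assert (Hv2 : is_lim_seq (fun n => (1 - q) * v n) p_infty).
  { pose proof (is_lim_seq_scal_l v (1 - q) p_infty Hv) as X.
    simpl in X. destruct (Rle_dec 0 (1 - q)); [|lra].
    destruct (Rle_lt_or_eq_dec 0 (1 - q) r); [exact X|lra]. }
  unfold ExpK. apply is_lim_seq_unique.
  apply (is_lim_seq_le_p_loc (fun n => (1 - q) * v n)); [| exact Hv2].
  exists 0%nat. intros n _. unfold v. rewrite scal_sum. apply sum_Rle. intros j _.
  rewrite law0_eq by (unfold q in Hq; try lra; auto).
  rewrite Hc. fold q.
  pose proof (Lm_bound p f ltac:(fold q; lra) hf0 hfmon j) as HL. fold q in HL.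
  assert (q ^ S j <= q). { simpl. assert (0 <= q ^ j <= 1) by (split; [apply pow_le; lra| clear -Hq; induction j; simpl; nra]). nra. }
  assert (exp (- (q / (1 - q)) * f (S j)) <= exp (- Lm p f j)).
  { apply exp_le_3 || (destruct (Req_dec (- (q / (1 - q)) * f (S j)) (- Lm p f j)) as [E|E];
      [rewrite E; lra| left; apply exp_increasing; lra]). }
  pose proof (exp_pos (- (q / (1 - q)) * f (S j))). nra.
Qed.
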